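(* Let $\Gamma$ be a weighted digraph with vertex set $\{1,\dots,n\}$, $n>1$, without loops and with strictly positive arc weights, let $L$ be its Laplacian matrix, $d$ its in-forest dimension, and $Q_k$ its matrices of in-forests with $k$ arcs. Then for every $\lambda\in\mathbb{C}$, $$\operatorname{adj}(\lambda I+L)=\sum_{k=0}^{n-d} Q_k\,\lambda^{\,n-k-1},$$ where $\lambda^0:=1$ (also for $\lambda=0$) and $\operatorname{adj}A$ denotes the transposed matrix of cofactors of $A$.
   Context: $W=(w_{ij})$ is the matrix of arc weights: $w_{ij}>0$ if there is an arc from $i$ to $j$, and $w_{ij}=0$ otherwise. The Laplacian matrix $L=(\ell_{ij})$ has $\ell_{ij}=-w_{ij}$ for $j\neq i$ and $\ell_{ii}=\sum_{k\neq i}w_{ik}$. The weight of a subgraph is the product of the weights of its arcs (1 if it has no arcs); the weight of a set of subgraphs is the sum of their weights (0 for the empty set). A converging tree is a weakly connected digraph in which one vertex (the root) has outdegree 0 and all others have outdegree 1. An in-forest of $\Gamma$ is a spanning subgraph of $\Gamma$ all of whose weak components are converging trees. The in-forest dimension $d$ is the minimum number of trees in an in-forest of $\Gamma$; the maximum number of arcs of an in-forest is $n-d$. For $k\ge0$, $Q_k=(q^k_{ij})$ is the $n\times n$ matrix where $q^k_{ij}$ is the total weight of the in-forests of $\Gamma$ with $k$ arcs in which $i$ belongs to a tree whose root is $j$; thus $Q_0=I$ and $Q_k=0$ for $k>n-d$. *)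

(* Defs.v *)
From HB Require Import structures.
From mathcomp Require Import all_boot all_order all_algebra.
Set Implicit Arguments. Unset Strict Implicit. Unset Printing Implicit Defensive.
Import Order.TTheory GRing.Theory Num.Theory.
Local Open Scope ring_scope.

Section Forests.
Variables (C : numClosedFieldType) (n : nat) (W : 'M[C]_n).

Definition is_arc (a : 'I_n * 'I_n) : bool := 0 < W a.1 a.2.

(* a (spanning) subgraph is given by its set of arcs *)
Definition subgraph (F : {set 'I_n * 'I_n}) : bool := [forall a in F, is_arc a].

Definition outdeg (F : {set 'I_n * 'I_n}) (i : 'I_n) : nat :=
  #|[set j | (i, j) \in F]|.

Definition wadj (F : {set 'I_n * 'I_n}) : rel 'I_n :=
  fun x y => ((x, y) \in F) || ((y, x) \in F).

Definition wcomp (F : {set 'I_n * 'I_n}) (v : 'I_n) : {set 'I_n} :=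
  [set u | connect (wadj F) v u].

(* the weak component of v (weakly connected by construction) is a converging
   tree: exactly one vertex has outdegree 0, all others have outdegree 1 *)
Definition comp_converging_tree (F : {set 'I_n * 'I_n}) (v : 'I_n) : bool :=
  (#|[set u in wcomp F v | outdeg F u == 0%N]| == 1%N) &&
  [forall u in wcomp F v, (outdeg F u == 0%N) || (outdeg F u == 1%N)].

Definition in_forest (F : {set 'I_n * 'I_n}) : bool :=
  subgraph F && [forall v, comp_converging_tree F v].

(* number of trees = number of weak components *)
Definition ntrees (F : {set 'I_n * 'I_n}) : nat := #|[set wcomp F v | v : 'I_n]|.

(* in-forest dimension: minimum number of trees of an in-forest
   (the empty arc set is always an in-forest; default value n) *)
Definition inforest_dim : nat :=
  \big[minn/n]_(F : {set 'I_n * 'I_n} | in_forest F) ntrees F.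

Definition sg_weight (F : {set 'I_n * 'I_n}) : C := \prod_(a in F) W a.1 a.2.

Definition rooted_at (F : {set 'I_n * 'I_n}) (i j : 'I_n) : bool :=
  (j \in wcomp F i) && (outdeg F j == 0%N).

Definition Qmat (k : nat) : 'M[C]_n :=
  \matrix_(i, j) \sum_(F : {set 'I_n * 'I_n} |
                        in_forest F && (#|F| == k) && rooted_at F i j) sg_weight F.

Definition laplacian : 'M[C]_n :=
  \matrix_(i, j) if i == j then \sum_(k | k != i) W i k else - W i j.

End Forests.

(* Main.v *)
Require Import Defs.
From HB Require Import structures.
From mathcomp Require Import all_boot all_order all_algebra perm zify.
Set Implicit Arguments. Unset Strict Implicit. Unset Printing Implicit Defensive.
Import Order.TTheory GRing.Theory Num.Theory.
Local Open Scope ring_scope.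

Section Graph.
Variable n : nat.
Implicit Types (f : {ffun 'I_n -> option 'I_n}).

Definition graph f : {set 'I_n * 'I_n} := [set a | f a.1 == Some a.2].
Definition st f (o : option 'I_n) : option 'I_n := obind f o.
Definition it f t v := iter t (st f) (Some v).

Lemma in_graph f r k : ((r, k) \in graph f) = (f r == Some k).
Proof. by rewrite inE. Qed.

Lemma iter_None f t : iter t (st f) None = None.
Proof. by elim: t => //= t ->. Qed.

Lemma itS f t v : it f t.+1 v = iter t (st f) (f v).
Proof. by rewrite /it iterSr. Qed.

Lemma wadj_sym (F : {set 'I_n * 'I_n}) : symmetric (wadj F).
Proof. by move=> x y; rewrite /wadj orbC. Qed.

Lemma connect_symF (F : {set 'I_n * 'I_n}) x y :
  connect (wadj F) x y = connect (wadj F) y x.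
Proof. by apply: sym_connect_sym; apply: wadj_sym. Qed.

Lemma connect_inv (e : rel 'I_n) (P : 'I_n -> Prop) x y :
  (forall a b, e a b -> P a -> P b) -> connect e x y -> P x -> P y.
Proof.
move=> He /connectP [p]; elim: p x => [|z p IH] x /=; first by move=> _ ->.
by case/andP=> exz pz Hy Px; apply: (IH z pz Hy); apply: He Px.
Qed.

Lemma it_connect f t v u : it f t v = Some u -> connect (wadj (graph f)) v u.
Proof.
elim: t v => [|t IH] v; first by case=> ->; exact: connect0.
rewrite itS; case E: (f v) => [w|]; last by rewrite iter_None.
move=> /IH; apply: connect_trans; apply: connect1.
by rewrite /wadj in_graph E eqxx.
Qed.

Lemma outdeg_graph f u : outdeg (graph f) u = (f u != None).
Proof.
rewrite /outdeg; case E: (f u) => [k|] /=.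
  rewrite -(cards1 k); apply: eq_card => x.
  by rewrite !inE /= E; apply/eqP/eqP => [[->]|->].
apply/eqP; rewrite cards_eq0; apply/eqP/setP => x.
by rewrite !inE /= E.
Qed.

Lemma reach_inv f j : f j = None ->
  forall a b, wadj (graph f) a b ->
   (exists t, it f t a = Some j) -> (exists t, it f t b = Some j).
Proof.
move=> fj a b; rewrite /wadj !in_graph => /orP [] /eqP E [t Ht].
  case: t Ht => [|t]; first by case=> aj; rewrite aj fj in E.
  by rewrite itS E => Ht; exists t.
by exists t.+1; rewrite itS E.
Qed.

Lemma wcomp_reach f j i : f j = None ->
  (j \in wcomp (graph f) i) <-> (exists t, it f t i = Some j).
Proof.
move=> fj; rewrite inE; split.
  rewrite connect_symF => Hc; apply: (connect_inv (reach_inv fj) Hc).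
  by exists 0.
by case=> t /it_connect.
Qed.

Lemma term_inv f :
  forall a b, wadj (graph f) a b ->
   (exists t, it f t a = None) -> (exists t, it f t b = None).
Proof.
move=> a b; rewrite /wadj !in_graph => /orP [] /eqP E [t Ht].
  case: t Ht => [|t] //.
  by rewrite itS E => Ht; exists t.
by exists t.+1; rewrite itS E.
Qed.

Lemma find_root f t v : it f t v = None ->
  exists t' r, it f t' v = Some r /\ f r = None.
Proof.
elim: t v => [|t IH] v //; rewrite itS.
case E: (f v) => [w|] H; last by exists 0, v.
by have [t' [r [H1 H2]]] := IH w H; exists t'.+1, r; rewrite itS E.
Qed.

Definition acyc f := forall v, exists t, it f t v = None.

Lemma acyc_cc f : acyc f -> forall v, comp_converging_tree (graph f) v.
Proof.
move=> ac v; apply/andP; split; last first.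
  by apply/forall_inP => u _; rewrite outdeg_graph; case: (f u).
have [t Ht] := ac v; have [t' [r [Hr fr]]] := find_root Ht.
apply/eqP; rewrite -(cards1 r); apply: eq_card => u.
rewrite !inE outdeg_graph; apply/idP/idP; last first.
  by move/eqP->; rewrite fr eqxx andbT; apply: (it_connect Hr).
case/andP=> cvu; rewrite eqb0 negbK => /eqP fu.
have [s Hs] : exists s, it f s u = Some r.
  apply: (connect_inv (reach_inv fr) cvu); by exists t'.
case: s Hs => [|s]; first by case=> ->.
by rewrite itS fu iter_None.
Qed.

Lemma cyc_some f x m : (0 < m)%N -> it f m x = Some x ->
  forall t, it f t x != None.
Proof.
move=> m0 Hm.
  elim/ltn_ind => t IH; case: (ltnP t m) => [tm|mt].
    apply/eqP => Ht; move: Hm; rewrite /it -(subnK (ltnW tm)) iterD.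
    by rewrite -/(it f t x) Ht iter_None.
  rewrite -(subnK mt) /it iterD -/(it f m x) Hm.
  by apply: IH; rewrite ltn_subrL m0 /=; case: (t) mt m0 => //; case: (m).
Qed.

Lemma find_arc f t v : it f t v = None -> f v != None ->
  exists r k, f r = Some k /\ f k = None.
Proof.
elim: t v => [|t IH] v //; rewrite itS.
case E: (f v) => [w|] // H _.
case Ew: (f w) => [w'|]; last by exists v, w.
by apply: (IH w H); rewrite Ew.
Qed.

Lemma acyc_remove f r : acyc f -> acyc [ffun x => if x == r then None else f x].
Proof.
move=> ac v; have [t Ht] := ac v; elim: t v Ht => [|t IH] v //.
rewrite itS => H; case: (eqVneq v r) => [->|ne].
  by exists 1%N; rewrite itS ffunE eqxx.
case E: (f v) => [w|]; last by exists 1%N; rewrite itS ffunE (negbTE ne) E.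
rewrite E in H; have [t' Ht'] := IH w H.
by exists t'.+1; rewrite itS ffunE (negbTE ne) E.
Qed.

Lemma cyc_not_cc f x m : (0 < m)%N -> it f m x = Some x ->
  ~~ comp_converging_tree (graph f) x.
Proof.
move=> m0 Hm.
have nT := cyc_some m0 Hm.
apply/negP => /andP [/eqP H _].
have : [set u in wcomp (graph f) x | outdeg (graph f) u == 0%N] = set0.
  apply/setP => u; rewrite !inE outdeg_graph eqb0 negbK.
  apply/negP => /andP [cxu /eqP fu].
  have : exists t, it f t u = None by exists 1%N; rewrite itS fu.
  rewrite connect_symF in cxu.
  move/(connect_inv (@term_inv f) cxu) => [t Ht].
  by move: (nT t); rewrite Ht.
by move=> E; rewrite E cards0 in H.
Qed.

Lemma pigeon f v : it f n v != None -> exists x m, (0 < m)%N /\ it f m x = Some x.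
Proof.
move=> Hn.
have allS : forall t, (t <= n)%N -> it f t v != None.
  move=> t tn; apply: contra Hn => /eqP Ht.
  by rewrite /it -[n in iter n _ _](subnK tn) iterD -/(it f t v) Ht iter_None.
pose h (t : 'I_n.+1) := odflt v (it f t v).
have hS : forall t : 'I_n.+1, it f t v = Some (h t).
  by move=> t; rewrite /h; move: (allS t (ltn_ord t)); case: (it f t v).
have : ~~ injectiveb h.
  apply/negP => /injectiveP /leq_card; rewrite !card_ord ltnn //.
case/injectivePn => t1 [t2 ne12 e12].
wlog lt12 : t1 t2 ne12 e12 / (t1 < t2)%N.
  move=> Hw; case: (ltngtP t1 t2) => H.
  - by apply: (Hw t1 t2).
  - by apply: (Hw t2 t1) => //; rewrite eq_sym.
  - by move: ne12; rewrite (val_inj H) eqxx.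
exists (h t1), (t2 - t1)%N; split; first by rewrite subn_gt0.
rewrite /it -(hS t1) /it -iterD subnK ?(ltnW lt12) //.
by rewrite -/(it f t2 v) -/(it f t1 v) !hS e12.
Qed.

End Graph.

Section Dets.
Variable C : numClosedFieldType.
Variable n : nat.
Implicit Types (f : {ffun 'I_n -> option 'I_n}).

Lemma det_addrow (A : 'M[C]_n) r0 r1 a : r0 != r1 ->
  \det (\matrix_(r, c) if r == r0 then A r0 c + a * A r1 c else A r c) = \det A.
Proof.
move=> ne.
set A' := \matrix_(r, c) _.
pose B := \matrix_(r, c) if r == r0 then A r1 c else A r c.
rewrite (@determinant_multilinear _ _ A' A B r0 1 a).
- rewrite (@determinant_alternate _ _ B r0 r1) ?mulr0 ?addr0 ?mul1r //.
  by move=> c; rewrite !mxE eqxx eq_sym (negbTE ne).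
- by apply/rowP => c; rewrite !mxE eqxx mul1r.
- apply/matrixP => x y; rewrite !mxE.
  by have -> : (lift r0 x == r0) = false by apply/negbTE; rewrite eq_sym neq_lift.
- apply/matrixP => x y; rewrite !mxE.
  by have -> : (lift r0 x == r0) = false by apply/negbTE; rewrite eq_sym neq_lift.
Qed.

Lemma det_eqrows (A : 'M[C]_n) r0 r1 : r0 != r1 -> (forall c, A r0 c = A r1 c) ->
  \det A = 0.
Proof. by move=> ne H; apply: (determinant_alternate ne) => c; apply: H. Qed.

Variable j : 'I_n.

Definition Mf f i : 'M[C]_n :=
  \matrix_(r, c) if r == j then (c == i)%:R else ((r == c)%:R - (f r == Some c)%:R).
Definition Nf f : 'M[C]_n :=
  \matrix_(r, c) ((r == c)%:R - (f r == Some c)%:R).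


Lemma tele_sum (V : zmodType) (g : nat -> V) m :
  \sum_(t < m) (g t - g t.+1) = g 0%N - g m.
Proof.
elim: m => [|m IH]; first by rewrite big_ord0 subrr.
by rewrite big_ord_recr /= IH addrA subrK.
Qed.

Lemma det_cycle f i x m : f j = None -> (0 < m)%N -> it f m x = Some x ->
  \det (Mf f i) = 0.
Proof.
move=> fj m0 Hm; have nT := cyc_some m0 Hm.
pose y t := odflt x (it f t x).
have yS t : it f t x = Some (y t).
  by rewrite /y; move: (nT t); case: (it f t x).
have fy t : f (y t) = Some (y t.+1).
  by have := yS t.+1; rewrite /it iterS -/(it f t x) yS.
have yj t : y t != j by apply/eqP => E; have := fy t; rewrite E fj.
have ym : y m = y 0%N by rewrite /y Hm.
pose v := \sum_(t < m) (delta_mx 0 (y t) : 'rV[C]_n).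
apply/eqP/det0P; exists v.
  apply/eqP => v0; have := congr1 (fun M : 'rV[C]_n => M 0 (y 0%N)) v0.
  rewrite summxE mxE.
  under eq_bigr => t _ do rewrite mxE eqxx /=.
  rewrite -natr_sum => /eqP; rewrite pnatr_eq0 (bigD1 (Ordinal m0)) //=.
  by rewrite eqxx.
rewrite mulmx_suml.
under eq_bigr => t _ do rewrite -rowE.
have -> : \sum_(t < m) row (y t) (Mf f i) =
          \sum_(t < m) (delta_mx 0 (y t) - delta_mx 0 (y t.+1) : 'rV[C]_n).
  apply: eq_bigr => t _; apply/rowP => c; rewrite !mxE (negbTE (yj t)) fy /=.
  by rewrite eq_sym [c == y t.+1]eq_sym.
by rewrite (tele_sum (fun t => (delta_mx 0 (y t) : 'rV[C]_n))) ym subrr.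
Qed.

Lemma Nf_noarc f : [set r | f r != None] = set0 -> Nf f = 1%:M.
Proof.
move=> E0; apply/matrixP => r c; rewrite !mxE.
have : r \in [set r | f r != None] = false by rewrite E0 inE.
by rewrite inE => /negbFE /eqP ->; rewrite subr0.
Qed.

Lemma det_N1 f : acyc f -> \det (Nf f) = 1.
Proof.
suff H : forall k f, (#|[set r | f r != None]| <= k)%N -> acyc f -> \det (Nf f) = 1.
  by move=> ac; apply: (H _ f (leqnn _)).
elim=> [|K IH] {}f.
  by rewrite leqn0 cards_eq0 => /eqP E0 _; rewrite Nf_noarc ?det1.
move=> Hk ac.
case: (boolP ([set r | f r != None] == set0)) => [/eqP E0 | /set0Pn [v0 Hv0]].
  by rewrite Nf_noarc ?det1.
have [t Ht] := ac v0; rewrite inE in Hv0.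
have [r [k [fr fk]]] := find_arc Ht Hv0.
have rk : r != k by apply/eqP => E; rewrite E fk in fr.
pose f' := [ffun x => if x == r then None else f x].
have -> : Nf f = \matrix_(x, c) if x == r then Nf f' r c + (-1) * Nf f' k c
                                 else Nf f' x c.
  apply/matrixP => x c; rewrite !mxE !ffunE eqxx.
  case: (eqVneq x r) => [->|ne]; last by [].
  by rewrite fr fk /= if_same subr0 subr0 mulN1r.
transitivity (\det (Nf f')); first exact: det_addrow.
apply: IH; last exact: acyc_remove.
have -> : [set x | f' x != None] = [set x | f x != None] :\ r.
  by apply/setP => x; rewrite !inE ffunE; case: (x == r).
by move: Hk; rewrite (cardsD1 r) inE fr /= add1n ltnS.
Qed.

Lemma det_main f i : f j = None -> acyc f ->
  \det (Mf f i) = (j \in wcomp (graph f) i)%:R.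
Proof.
move=> fj ac; have [t Ht] := ac i; elim: t i Ht => [|t IH] i //.
rewrite itS => H.
case: (eqVneq i j) => [->|ne].
  have -> : Mf f j = Nf f.
    apply/matrixP => r c; rewrite !mxE; case: (eqVneq r j) => [->|//].
    by rewrite fj subr0 eq_sym.
  by rewrite det_N1 // inE connect0.
case E: (f i) => [k|].
  rewrite E in H.
  have -> : Mf f i = \matrix_(x, c) if x == j then Mf f k j c + 1 * Mf f k i c
                                    else Mf f k x c.
    apply/matrixP => x c; case: (eqVneq x j) => [->|xj]; last by rewrite !mxE (negbTE xj).
    rewrite !mxE eqxx (negbTE ne) E /= mul1r.
    by rewrite -[Some k == Some c]/(k == c) [i == c]eq_sym [k == c]eq_sym addrC subrK.
  rewrite det_addrow; last by rewrite eq_sym.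
  have cik : connect (wadj (graph f)) i k.
    by apply: connect1; rewrite /wadj in_graph E eqxx.
  have -> : (j \in wcomp (graph f) i) = (j \in wcomp (graph f) k).
    rewrite !inE; apply/idP/idP => h; first by apply: connect_trans h; rewrite connect_symF.
    exact: connect_trans cik h.
  exact: IH.
have -> : (j \in wcomp (graph f) i) = false.
  apply/negbTE/negP => /(wcomp_reach i fj) [[|s]].
    by case=> ij; rewrite ij eqxx in ne.
  by rewrite itS E iter_None.
apply: (@det_eqrows _ i j ne) => c; rewrite !mxE (negbTE ne) eqxx E /=.
by rewrite subr0 eq_sym.
Qed.

End Dets.

Lemma big_opt (R : nmodType) (T : finType) (F : option T -> R) :
  \sum_(o : option T) F o = F None + \sum_(k : T) F (Some k).
Proof.
rewrite (bigD1 None) //=; congr (_ + _).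
rewrite (reindex_omap Some id) /=; last by case.
by apply: eq_bigl => k; rewrite eqxx.
Qed.

Lemma det_expand (R : comRingType) (n : nat) (J : finType) (w : 'I_n -> J -> R)
  (v : 'I_n -> J -> 'I_n -> R) :
  \det (\matrix_(r, c) \sum_(o : J) w r o * v r o c) =
  \sum_(ff : {ffun 'I_n -> J}) (\prod_r w r (ff r)) * \det (\matrix_(r, c) v r (ff r) c).
Proof.
rewrite /determinant.
transitivity (\sum_(s : 'S_n) \sum_(ff : {ffun 'I_n -> J})
   (-1) ^+ s * ((\prod_r w r (ff r)) * \prod_r v r (ff r) (s r))).
  apply: eq_bigr => s _.
  rewrite (eq_bigr (fun r => \sum_o w r o * v r o (s r))); last by move=> r _; rewrite mxE.
  rewrite bigA_distr_bigA mulr_sumr; apply: eq_bigr => ff _.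
  by rewrite big_split.
rewrite exchange_big; apply: eq_bigr => ff _; rewrite mulr_sumr.
apply: eq_bigr => s _.
by rewrite mulrCA; congr (_ * (_ * _)); apply: eq_bigr => r _; rewrite mxE.
Qed.

Lemma cofactor_row (R : comRingType) (n : nat) (A : 'M[R]_n) j i :
  cofactor A j i = \det (\matrix_(r, c) if r == j then (c == i)%:R else A r c).
Proof.
rewrite expand_cofactor /determinant big_mkcond /=; apply: eq_bigr => s _.
rewrite [in RHS](bigD1 j) //= mxE eqxx; case: eqP => [sji|_]; last by rewrite mul0r mulr0.
rewrite mul1r; congr (_ * _); apply: eq_big => [k|k kj]; first by rewrite eq_sym.
by rewrite mxE eq_sym (negbTE kj).
Qed.

Lemma bigmin_le (I : finType) (P : pred I) (g : I -> nat) m i0 :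
  P i0 -> (\big[minn/m]_(i | P i) g i <= g i0)%N.
Proof.
move=> Pi0; have : i0 \in index_enum I by rewrite mem_index_enum.
elim: (index_enum I) => // a r IH; rewrite inE big_cons => /orP [/eqP <-|ir].
  by rewrite Pi0 geq_minl.
case: ifP => _; last exact: IH.
exact: leq_trans (geq_minr _ _) (IH ir).
Qed.

Section Cards.
Variable n : nat.
Implicit Types (f : {ffun 'I_n -> option 'I_n}) (F : {set 'I_n * 'I_n}).

Lemma graph_imset f :
  graph f = [set (r, odflt r (f r)) | r in [set r | f r != None]].
Proof.
apply/setP => [[r k]]; rewrite in_graph; apply/eqP/imsetP.
  by move=> E; exists r; rewrite ?inE E.
by case=> r' Hr' [-> ->]; rewrite inE in Hr'; case: (f r') Hr'.
Qed.

Lemma graph_inj : injective (@graph n).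
Proof.
move=> f1 f2 E; apply/ffunP => r.
case E1: (f1 r) => [k|].
  have : (r, k) \in graph f1 by rewrite in_graph E1.
  by rewrite E in_graph => /eqP.
case E2: (f2 r) => [k|] //.
have : (r, k) \in graph f2 by rewrite in_graph E2.
by rewrite -E in_graph E1.
Qed.

Lemma card_graph f : #|graph f| = #|[set r | f r != None]|.
Proof. by rewrite graph_imset card_imset // => x y [] . Qed.

Definition pickf F : {ffun 'I_n -> option 'I_n} := [ffun r => [pick k | (r, k) \in F]].

Lemma pickfK F : (forall r, outdeg F r <= 1)%N -> graph (pickf F) = F.
Proof.
move=> H; apply/setP => [[r k]]; rewrite in_graph ffunE.
case: pickP => [k' Hk'|H0]; last by rewrite H0.
apply/eqP/idP => [[<-]//|Hk]; congr Some.
have /card_le1P := H r => /(_ k'); rewrite inE => /(_ Hk') /(_ k).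
by rewrite inE Hk => /esym /eqP.
Qed.

Lemma in_forest_out (C : numClosedFieldType) (W : 'M[C]_n) F :
  in_forest W F -> forall r, (outdeg F r <= 1)%N.
Proof.
case/andP=> _ /forallP H r; have /andP [_ /forall_inP H2] := H r.
have := H2 r; rewrite inE connect0 => /(_ isT) /orP [] /eqP -> //.
Qed.

Lemma forest_bound (C : numClosedFieldType) (W : 'M[C]_n) F :
  in_forest W F -> (#|F| <= n - inforest_dim W)%N.
Proof.
move=> Hf; have dle : (inforest_dim W <= ntrees F)%N.
  exact: bigmin_le.
have Hout := in_forest_out Hf.
set f := pickf F.
have Ff : graph f = F by apply: pickfK.
set R := [set r | outdeg F r == 0%N].
have cR : (#|F| + #|R| = n)%N.
  apply: etrans (card_ord n); rewrite -Ff card_graph -(cardsC [set r | f r != None]).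
  congr (_ + _); apply: eq_card => r; rewrite !inE -Ff outdeg_graph.
  by case: (f r).
have ntR : (ntrees F <= #|R|)%N.
  apply: leq_trans (leq_imset_card (wcomp F) R).
  apply: subset_leq_card; apply/subsetP => S /imsetP [v _ ->].
  case/andP: Hf => _ /forallP /(_ v) /andP [/eqP c1 _].
  have /set0Pn [u] : [set u in wcomp F v | outdeg F u == 0%N] != set0.
    by apply/eqP => E; rewrite E cards0 in c1.
  rewrite !inE => /andP [cvu ou]; apply/imsetP; exists u; first by rewrite inE.
  apply/setP => x; rewrite !inE; apply/idP/idP => h.
    by apply: connect_trans h; rewrite connect_symF.
  exact: connect_trans cvu h.
have h1 : (inforest_dim W + #|F| <= #|F| + #|R|)%N.
  by rewrite addnC leq_add2l (leq_trans dle ntR).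
rewrite cR in h1; lia.
Qed.

End Cards.

Section Main.
Variables (C : numClosedFieldType) (n : nat) (W : 'M[C]_n).
Hypothesis hloop : forall i, W i i = 0.
Hypothesis hpos : forall i j, W i j = 0 \/ 0 < W i j.
Variable lambda : C.
Variables i j : 'I_n.

Definition wt r (o : option 'I_n) : C :=
  if r == j then (o == None)%:R else if o is Some k then W r k else lambda.
Definition vec r (o : option 'I_n) c : C :=
  if r == j then (c == i)%:R else ((r == c)%:R - (o == Some c)%:R).

Lemma B_sum :
  (\matrix_(r, c) if r == j then (c == i)%:R else (lambda%:M + laplacian W) r c)
  = \matrix_(r, c) \sum_o wt r o * vec r o c.
Proof.
apply/matrixP => r c; rewrite !mxE big_opt /wt /vec.
have [rj|rj] := eqVneq r j.
  by subst r; rewrite eqxx /= mul1r big1 ?addr0 // => k _; rewrite mul0r.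
have -> : \sum_k W r k * ((r == c)%:R - (Some k == Some c)%:R) =
          (r == c)%:R * \sum_k W r k - W r c.
  transitivity (\sum_k (W r k * (r == c)%:R - W r k * (k == c)%:R)).
    by apply: eq_bigr => k _; rewrite mulrBr.
  rewrite sumrB -mulr_suml mulrC; congr (_ - _).
  rewrite (bigD1 c) //= eqxx mulr1 big1 ?addr0 // => k kc.
  by rewrite (negbTE kc) mulr0.
rewrite subr0; case: (eqVneq r c) => [rc|rc].
  subst c; rewrite mulr1 mul1r hloop subr0 [X in _ = _ + X](bigD1 r) //=.
  by rewrite hloop add0r.
by rewrite /= !mulr0n mulr0 mul0r !add0r.
Qed.


Lemma prod_wt (ff : {ffun 'I_n -> option 'I_n}) : ff j = None ->
  \prod_r wt r (ff r) = lambda ^+ (n - #|graph ff| - 1) * sg_weight W (graph ff).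
Proof.
move=> fj; rewrite (bigD1 j) //= {1}/wt eqxx fj /= mul1r.
rewrite (bigID (fun r => ff r == None)) /=; congr (_ * _).
  rewrite (eq_bigr (fun _ => lambda)); last first.
    by move=> r /andP [rj /eqP fr]; rewrite /wt (negbTE rj) fr.
  rewrite prodr_const; congr (_ ^+ _).
  rewrite card_graph.
  have h1 := cardsC [set r | ff r != None].
  have h2 := cardD1 j [pred r | ff r == None].
  have h3 : (#|[set r | ff r != None] | + #|[pred r | ff r == None]| = n)%N.
    rewrite -[RHS]card_ord -h1; congr (_ + _); apply: eq_card => r.
    by rewrite !inE negbK.
  have h4 : #|(fun r => (r != j) && (ff r == None))| =
            #|[predD1 [pred r | ff r == None] & j]|.
    by apply: eq_card => r; rewrite !inE.
  rewrite inE /= fj eqxx /= in h2.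
  rewrite h4; move: h2 h3; set a := #|[set r | ff r != None]|; set b := #|[pred r | ff r == None]|; set c := #|[predD1 _ & j]|. lia.
rewrite /sg_weight graph_imset big_imset /=; last by move=> x y _ _ [].
apply: eq_big => r; first by rewrite inE; case: eqP => // ->; rewrite fj.
by move=> /andP [rj]; rewrite /wt (negbTE rj); case: (ff r).
Qed.


Lemma term_eq (ff : {ffun 'I_n -> option 'I_n}) :
  (\prod_r wt r (ff r)) * \det (\matrix_(r, c) vec r (ff r) c) =
  if (ff j == None) && in_forest W (graph ff) && rooted_at (graph ff) i j
  then lambda ^+ (n - #|graph ff| - 1) * sg_weight W (graph ff) else 0.
Proof.
have -> : (\matrix_(r, c) vec r (ff r) c) = Mf C j ff i by [].
case: (eqVneq (ff j) None) => [fj|fj] /=; last first.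
  by rewrite (bigD1 j) //= {1}/wt eqxx (negbTE fj) !mul0r.
rewrite /in_forest.
case: (boolP (subgraph W (graph ff))) => sg /=; last first.
  have [r [k [frk W0]]] : exists r k, ff r = Some k /\ W r k = 0.
    move: sg; rewrite /subgraph => /forall_inPn [[r k]].
    rewrite in_graph => /eqP frk; rewrite /is_arc /= => nW.
    by exists r, k; split => //; case: (hpos r k) nW => // ->.
  have rj : r != j by apply/eqP => E; rewrite E fj in frk.
  by rewrite (bigD1 r) //= {1}/wt (negbTE rj) frk W0 !mul0r.
rewrite prod_wt //.
case: (boolP [forall v, it ff n v == None]) => [/forallP ac | /forallPn [v hv]].
  have acf : acyc ff by move=> v; exists n; apply/eqP.
  rewrite (det_main C i fj acf).
  have -> : [forall v, comp_converging_tree (graph ff) v].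
    by apply/forallP; apply: acyc_cc.
  rewrite /rooted_at outdeg_graph fj /= andbT.
  by case: (j \in _); rewrite ?mulr1 ?mulr0.
have [x [m [m0 hm]]] := pigeon hv.
rewrite (det_cycle C i fj m0 hm) mulr0.
have -> : [forall v, comp_converging_tree (graph ff) v] = false.
  by apply/negbTE/forallPn; exists x; exact: cyc_not_cc m0 hm.
by [].
Qed.

End Main.
Unset Implicit Arguments.

Theorem proposition3 (C : numClosedFieldType) (n : nat) (W : 'M[C]_n)
  (hn : (1 < n)%N)
  (hloop : forall i, W i i = 0)
  (hpos : forall i j, W i j = 0 \/ 0 < W i j)
  (lambda : C) :
  \adj (lambda%:M + laplacian W) =
  \sum_(k < (n - inforest_dim W).+1) lambda ^+ (n - k - 1) *: Qmat W k.
Proof.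
apply/matrixP => i j.
pose G (F : {set 'I_n * 'I_n}) := lambda ^+ (n - #|F| - 1) * sg_weight W F.
pose P (F : {set 'I_n * 'I_n}) := in_forest W F && rooted_at F i j.
transitivity (\sum_(F | P F) G F).
  rewrite mxE cofactor_row (B_sum hloop lambda i j) det_expand.
  rewrite (eq_bigr _ (fun ff _ => term_eq hpos lambda i j ff)) -big_mkcond /=.
  rewrite -(big_imset (fun F => G F) (in2W (@graph_inj n))) /=.
  apply: eq_bigl => F; apply/imsetP/idP.
    by case=> ff; rewrite unfold_in -andbA => /andP [_ H] ->.
  move=> /andP [Hf Hr].
  have Fp := pickfK (in_forest_out Hf).
  exists (pickf F); last by rewrite Fp.
  rewrite unfold_in -andbA Fp Hf Hr andbT.
  have := outdeg_graph (pickf F) j; rewrite Fp andbT.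
  move: Hr => /andP [_ /eqP ->].
  by case: (pickf F j).
rewrite summxE.
transitivity (\sum_(k < (n - inforest_dim W).+1)
               \sum_(F | in_forest W F && (#|F| == k) && rooted_at F i j) G F); last first.
  apply: eq_bigr => k _; rewrite !mxE mulr_sumr.
  by apply: eq_bigr => F /andP [/andP [_ /eqP <-] _].
rewrite (@partition_big _ _ _ _ _ _ _ (fun F : {set 'I_n * 'I_n} => (inord #|F| : 'I_(n - inforest_dim W).+1)) xpredT) //=.
apply: eq_bigr => k _; apply: eq_bigl => F; rewrite /P.
case Hf: (in_forest W F) => //=.
have hb := forest_bound Hf.
rewrite andbC; congr (_ && _).
by rewrite -val_eqE /= inordK // ltnS.
Qed.
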